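(* Let $x,y\in W_0^J$ and let $\sigma\in\mathbb{Q}$ with $0<\sigma<1$. Assume there is a directed $\sigma$-path $x=w_0\xleftarrow{\beta_1}w_1\xleftarrow{\beta_2}\cdots\xleftarrow{\beta_n}w_n=y$ from $y$ to $x$ in the parabolic quantum Bruhat graph. Then $\sigma(x\Lambda-y\Lambda)\in Q_0:=\bigoplus_{j\in I_0}\mathbb{Z}\alpha_j$.
   Context: Let $\Delta_0$ be the finite root system (simple roots $\alpha_j$, coroots $\alpha_j^\vee$, $j\in I_0$) of the finite-dimensional simple Lie algebra underlying an untwisted affine Lie algebra, with positive roots $\Delta_0^+$ and Weyl group $W_0$ generated by simple reflections $r_j$. Let $\lambda=\sum_{i\in I_0}m_i\varpi_i$ ($m_i\in\mathbb{Z}_{\ge0}$) be a level-zero dominant integral weight and $\Lambda$ its class modulo $\mathbb{C}\delta$, with $\langle\Lambda,\alpha_j^\vee\rangle=m_j$ and $W_0$ acting on it. Let $J=\{j\in I_0\mid m_j=0\}$, $W_J=\langle r_j\mid j\in J\rangle$, $\Delta_J^+=\Delta_0^+\cap\bigoplus_{j\in J}\mathbb{Z}\alpha_j$, $W_0^J$ the minimal-length representatives of $W_0/W_J$, $\lfloor w\rfloor$ the representative of $wW_J$, $\ell$ the length, $\rho$, $\rho_J$ the half-sums of positive roots of $\Delta_0$, $\Delta_J$. The parabolic quantum Bruhat graph has vertices $W_0^J$ and an edge $\lfloor wr_\beta\rfloor\xleftarrow{\beta}w$ for $w\in W_0^J$, $\beta\in\Delta_0^+\setminus\Delta_J^+$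 whenever $\ell(\lfloor wr_\beta\rfloor)=\ell(w)+1$ or $\ell(\lfloor wr_\beta\rfloor)=\ell(w)-2\langle\rho-\rho_J,\beta^\vee\rangle+1$. A directed path from $y$ to $x$ is a chain of edges $x=w_0\xleftarrow{\beta_1}w_1\xleftarrow{}\cdots\xleftarrow{\beta_n}w_n=y$; it is a directed $\sigma$-path if $\sigma\langle\Lambda,\beta_k^\vee\rangle\in\mathbb{Z}$ for all $1\le k\le n$. *)

(* Defs.v *)
From HB Require Import structures.
From mathcomp Require Import all_boot all_order all_algebra.
From Stdlib Require Import ClassicalEpsilon.
Set Implicit Arguments. Unset Strict Implicit. Unset Printing Implicit Defensive.
Import Order.TTheory GRing.Theory Num.Theory.
Local Open Scope ring_scope.

Definition classb (P : Prop) : bool :=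
  if excluded_middle_informative P then true else false.

Section RootSystems.
Variables (R : realFieldType) (d : nat).
Notation V := 'rV[R]_d.

Definition dotp (u v : V) : R := (u *m v^T) 0 0.
Definition coroot (a : V) : V := (2 / dotp a a) *: a.
Definition pair (l a : V) : R := dotp l (coroot a).
Definition refl (a v : V) : V := v - pair v a *: a.

(* Weyl group elements are matrices M, acting by v |-> v *m M. *)
Definition act (M : 'M[R]_d) (v : V) : V := v *m M.
(* product w1 w2 (first w2, then w1) *)
Definition wmul (w1 w2 : 'M[R]_d) : 'M[R]_d := w2 *m w1.
(* matrix of the reflection r_a : v *m refl_mx a = refl a v *)
Definition refl_mx (a : V) : 'M[R]_d := 1%:M - (coroot a)^T *m a.

Definition root_system (Phi : seq V) : Prop :=
  [/\ 0 \notin Phi,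
      (forall v : V, exists c : V -> R, v = \sum_(b <- Phi) c b *: b),
      (forall a b, a \in Phi -> b \in Phi -> refl a b \in Phi),
      (forall a b, a \in Phi -> b \in Phi -> exists z : int, pair b a = z%:~R) &
      (forall a (c : R), a \in Phi -> c *: a \in Phi -> c = 1 \/ c = -1)].

Definition irreducible_rs (Phi : seq V) : Prop :=
  forall P : pred V,
    (forall a b, a \in Phi -> b \in Phi -> P a -> ~~ P b -> dotp a b = 0) ->
    all P Phi \/ all (predC P) Phi.

Variables (r : nat) (alpha : 'I_r -> V).

Definition is_base (Phi : seq V) : Prop :=
  [/\ (forall i, alpha i \in Phi),
      (forall c : 'I_r -> R, \sum_i c i *: alpha i = 0 -> forall i, c i = 0) &
      (forall b, b \in Phi -> exists c : 'I_r -> int,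
          b = \sum_i (c i)%:~R *: alpha i /\
          ((forall i, 0 <= c i) \/ (forall i, c i <= 0)))].

Definition posroot (Phi : seq V) (b : V) : bool :=
  classb (b \in Phi /\ exists c : 'I_r -> nat, b = \sum_i (c i)%:R *: alpha i).

Definition posrootJ (Phi : seq V) (J : pred 'I_r) (b : V) : bool :=
  posroot Phi b &&
  classb (exists c : 'I_r -> int,
            (forall i, ~~ J i -> c i = 0) /\ b = \sum_i (c i)%:~R *: alpha i).

Definition rho (Phi : seq V) : V :=
  2^-1 *: \sum_(b <- undup Phi | posroot Phi b) b.
Definition rhoJ (Phi : seq V) (J : pred 'I_r) : V :=
  2^-1 *: \sum_(b <- undup Phi | posrootJ Phi J b) b.

Definition word_mx (s : seq 'I_r) : 'M[R]_d :=
  foldr (fun i M => wmul (refl_mx (alpha i)) M) 1%:M s.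

Definition has_word (w : 'M[R]_d) (n : nat) : bool :=
  [exists s : n.-tuple 'I_r, word_mx s == w].

Definition inW (w : 'M[R]_d) : Prop := exists n, has_word w n.

(* length: minimal number of simple reflections (0 outside W_0) *)
Definition wlen (w : 'M[R]_d) : nat :=
  match excluded_middle_informative (exists n, has_word w n) with
  | left H => ex_minn H
  | right _ => 0%N
  end.

Definition inWJ (J : pred 'I_r) (u : 'M[R]_d) : Prop :=
  exists s : seq 'I_r, all J s /\ word_mx s = u.

Definition inWJmin (J : pred 'I_r) (w : 'M[R]_d) : Prop :=
  inW w /\ forall u, inWJ J u -> (wlen w <= wlen (wmul w u))%N.

Definition is_floor (J : pred 'I_r) (w v : 'M[R]_d) : Prop :=
  inWJmin J v /\ exists u, inWJ J u /\ v = wmul w u.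

(* edge  v <-(b)- w  of the parabolic quantum Bruhat graph, v = floor(w r_b) *)
Definition qbg_edge (Phi : seq V) (J : pred 'I_r) (w : 'M[R]_d) (b : V)
    (v : 'M[R]_d) : Prop :=
  [/\ inWJmin J w, posroot Phi b, ~~ posrootJ Phi J b,
      is_floor J (wmul w (refl_mx b)) v &
      (wlen v = (wlen w).+1 \/
       ((wlen v)%:R : R) = (wlen w)%:R - 2 * pair (rho Phi - rhoJ Phi J) b + 1)].

(* x = w_0 <-(b_1)- w_1 <- ... <-(b_n)- w_n, path given as [:: (b_1,w_1); ...; (b_n,w_n)] *)
Fixpoint qbg_path (Phi : seq V) (J : pred 'I_r) (x : 'M[R]_d)
    (p : seq (V * 'M[R]_d)) : Prop :=
  match p with
  | [::] => True
  | (b, w) :: p' => qbg_edge Phi J w b x /\ qbg_path Phi J w p'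
  end.

End RootSystems.

(* Main.v *)
Require Import Defs.
From HB Require Import structures.
From mathcomp Require Import all_boot all_order all_algebra.
From Stdlib Require Import ClassicalEpsilon.
Import Order.TTheory GRing.Theory Num.Theory.
Local Open Scope ring_scope.

Lemma act_refl (R : realFieldType) (d : nat) (a v : 'rV[R]_d) :
  act (refl_mx a) v = refl a v.
Proof.
rewrite /act /refl_mx /refl /pair /dotp mulmxBr mulmx1 mulmxA.
by rewrite {1}[v *m _]mx11_scalar mul_scalar_mx.
Qed.

Lemma act_wmul (R : realFieldType) (d : nat) (A B : 'M[R]_d) v :
  act (wmul A B) v = act A (act B v).
Proof. by rewrite /act /wmul mulmxA. Qed.

Lemma word_root (R : realFieldType) (d r : nat) (Phi : seq 'rV[R]_d)
    (alpha : 'I_r -> 'rV[R]_d) (s : seq 'I_r) b :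
  root_system Phi -> (forall i, alpha i \in Phi) -> b \in Phi ->
  act (word_mx alpha s) b \in Phi.
Proof.
move=> [_ _ Hr _ _] Ha Hb; elim: s => [|i s IH] /=.
  by rewrite /act mulmx1.
by rewrite act_wmul act_refl; apply: Hr.
Qed.

Lemma wordJ_fix (R : realFieldType) (d r : nat) (alpha : 'I_r -> 'rV[R]_d)
    (Lam : 'rV[R]_d) (J : pred 'I_r) (s : seq 'I_r) :
  (forall j, J j -> pair Lam (alpha j) = 0) -> all J s ->
  act (word_mx alpha s) Lam = Lam.
Proof.
move=> H0; elim: s => [|i s IH] /=.
  by move=> _; rewrite /act mulmx1.
move=> /andP [Ji As]; rewrite act_wmul IH // act_refl /refl H0 // scale0r; apply: subr0.
Qed.

Theorem lemma4p6 (R : realFieldType) (d r : nat) (Phi : seq 'rV[R]_d)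
    (alpha : 'I_r -> 'rV[R]_d) (Lam : 'rV[R]_d) (m : 'I_r -> nat)
    (x y : 'M[R]_d) (p : seq ('rV[R]_d * 'M[R]_d)) (sigma : rat) :
  root_system Phi -> irreducible_rs Phi -> is_base alpha Phi ->
  (forall j, pair Lam (alpha j) = (m j)%:R) ->
  let J := [pred j | m j == 0%N] in
  inWJmin alpha J x -> inWJmin alpha J y ->
  0 < sigma < 1 ->
  qbg_path alpha Phi J x p ->
  last x (map snd p) = y ->
  (forall b, b \in map fst p -> exists z : int, ratr sigma * pair Lam b = z%:~R) ->
  exists c : 'I_r -> int,
    ratr sigma *: (act x Lam - act y Lam) = \sum_i (c i)%:~R *: alpha i.
Proof.
move=> Hrs _ Hbase Hm J _ _ _ Hp <-.
have [Ha _ Hint] := Hbase.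
have H0 : forall j, J j -> pair Lam (alpha j) = 0.
  by move=> j /eqP Hj; rewrite Hm Hj.
elim: p x Hp => [|[b w] p IH] x /=.
  move=> _ _; exists (fun _ => 0); rewrite subrr scaler0.
  by rewrite big1 // => i _; rewrite scale0r.
move=> [He Hp] Hz.
have [c1 Ec1] := IH w Hp (fun b' Hb' => Hz b' (mem_behead (s := b :: _) Hb')).
have [z Ez] := Hz b (mem_head _ _).
have [[[n Hw] _] Hpos _ [_ [u [[s [As Es]] Ex]]] _] := He.
have bPhi : b \in Phi.
  by move: Hpos; rewrite /posroot /classb; case: excluded_middle_informative => // -[].
have [sw /eqP Esw] := existsP Hw.
have wbPhi : act w b \in Phi by rewrite -Esw; apply: word_root.
have [c2 [Ec2 _]] := Hint _ wbPhi.
have Hx : act x Lam = act w Lam - pair Lam b *: act w b.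
  rewrite Ex !act_wmul -Es (@wordJ_fix _ _ _ alpha Lam J s H0 As) act_refl /refl /act.
  by rewrite mulmxBl -scalemxAl.
exists (fun i => c1 i - z * c2 i).
have -> : act x Lam - act (last w [seq i.2 | i <- p]) Lam =
  (act w Lam - act (last w [seq i.2 | i <- p]) Lam) - pair Lam b *: act w b.
  by rewrite Hx; rewrite addrAC.
rewrite scalerBr Ec1 scalerA Ez Ec2 scaler_sumr -sumrB.
apply: eq_bigr => i _; rewrite scalerA -scalerBl; congr (_ *: _).
by rewrite rmorphB rmorphM.
Qed.
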